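(* Let $C\subseteq\Lambda$ be any region. Let $W$ be any Hamiltonian that is relatively bounded by $H_0(C)$ with a constant $0\le b<1$, i.e. $\|W\psi\|\le b\|H_0(C)\psi\|$ for all $\psi\in\mathcal{H}$. Then for any operator $S$ on $\mathcal{H}$, \[ \|Q_C[S,W]P_C\|\le b\,\|Q_C[S,H_0(C)]P_C\|. \]
   Context: Let $\Lambda=\mathbb{Z}_L\times\mathbb{Z}_L$, each site carrying a finite-dimensional Hilbert space, $\mathcal{H}$ their tensor product, and $\mathcal{S}(2)$ the set of $2\times2$ squares of sites. $H_0=\sum_{A\in\mathcal{S}(2)}G_A$ with each $G_A$ acting on $A$, the $G_A$ pairwise commuting, $G_A\ge0$ and $G_A^2\ge G_A$. $P_A$ is the projector onto $\ker G_A$; for a region $C$, $P_C=\prod_{A\in\mathcal{S}(2),A\subseteq C}P_A$, $Q_C=I-P_C$, and $H_0(C)=\sum_{A\in\mathcal{S}(2),A\subseteq C}G_A$. *)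

(* Defs.v *)
From HB Require Import structures.
From mathcomp Require Import all_boot all_order all_algebra.
From mathcomp Require Import classical_sets reals.
From mathcomp Require Import complex.
Set Implicit Arguments. Unset Strict Implicit. Unset Printing Implicit Defensive.
Import Order.TTheory GRing.Theory Num.Theory.
Local Open Scope ring_scope.

(* Sites of the torus Lambda = Z_L x Z_L. *)
Definition site (L : nat) := ('I_L * 'I_L)%type.

(* Basis configurations of H = (x)_{s in Lambda} C^{d s}:
   a basis state assigns to every site s a basis index in 'I_(d s). *)
Definition cfg (L : nat) (d : site L -> nat) := {dffun forall s : site L, 'I_(d s)}.

Section Ops.
Variables (R : realType) (L : nat) (d : site L -> nat).
Local Notation C := R[i].
Local Notation T := (cfg d).

Definition vec := T -> C.
Definition op := T -> T -> C.

Definition apply (A : op) (v : vec) : vec := fun x => \sum_y A x y * v y.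
Definition opmul (A B : op) : op := fun x z => \sum_y A x y * B y z.
Definition opadd (A B : op) : op := fun x y => A x y + B x y.
Definition opsub (A B : op) : op := fun x y => A x y - B x y.
Definition opid : op := fun x y => (x == y)%:R.
Definition opzero : op := fun _ _ => 0.
Definition opscale (c : C) (A : op) : op := fun x y => c * A x y.
Definition adjoint (A : op) : op := fun x y => (A y x)^*.
Definition comm (A B : op) : op := opsub (opmul A B) (opmul B A).

Definition dot (u v : vec) : C := \sum_x (u x)^* * v x.
Definition vnorm (v : vec) : R := Num.sqrt (complex.Re (dot v v)).

Definition opnorm (A : op) : R :=
  sup [set vnorm (apply A v) | v in [set v : vec | vnorm v <= 1]].

Definition herm_op (A : op) : Prop := forall x y, A x y = (A y x)^*.
Definition psd (A : op) : Prop := forall v, 0 <= dot v (apply A v).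
Definition ople (A B : op) : Prop := psd (opsub B A).

Definition is_kernel_projector (G P : op) : Prop :=
  herm_op P /\ opmul P P = P /\
  (forall v, apply G (apply P v) = (fun _ => 0)) /\
  (forall v, apply G v = (fun _ => 0) -> apply P v = v).

(* A acts on the region X: A = a (x) I_{Lambda \ X} *)
Definition agree_on (X : {set site L}) (x y : T) := forall s, s \in X -> x s = y s.
Definition acts_on (X : {set site L}) (A : op) : Prop :=
  (forall x y, ~ agree_on (~: X) x y -> A x y = 0) /\
  (forall x y x' y', agree_on (~: X) x y -> agree_on (~: X) x' y' ->
     agree_on X x x' -> agree_on X y y' -> A x y = A x' y').

Definition opsum (I : Type) (r : seq I) (F : I -> op) : op :=
  foldr (fun i acc => opadd (F i) acc) opzero r.
Definition opprod (I : Type) (r : seq I) (F : I -> op) : op :=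
  foldr (fun i acc => opmul (F i) acc) opid r.
End Ops.

Definition square (L : nat) (c : site L) : {set site L} :=
  [set c; (ordS c.1, c.2); (c.1, ordS c.2); (ordS c.1, ordS c.2)].
Definition squares (L : nat) : {set {set site L}} :=
  [set square c | c in [set: site L]].

Definition squares_in (L : nat) (X : {set site L}) : seq {set site L} :=
  enum [set A in squares L | A \subset X].

Definition H0_on (R : realType) (L : nat) (d : site L -> nat)
  (G : {set site L} -> op R d) (X : {set site L}) : op R d :=
  opsum (squares_in X) G.
Definition P_on (R : realType) (L : nat) (d : site L -> nat)
  (P : {set site L} -> op R d) (X : {set site L}) : op R d :=
  opprod (squares_in X) P.
Definition Q_on (R : realType) (L : nat) (d : site L -> nat)
  (P : {set site L} -> op R d) (X : {set site L}) : op R d :=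
  opsub (@opid R L d) (P_on P X).

(* Main.v *)
Require Import Defs.
From HB Require Import structures.
From mathcomp Require Import all_boot all_order all_algebra.
From mathcomp Require Import boolp classical_sets reals.
From mathcomp Require Import complex ring.
Import Order.TTheory GRing.Theory Num.Theory.
Local Open Scope ring_scope.

Section Alg.
Variables (R : realType) (L : nat) (d : site L -> nat).
Local Notation C := R[i].
Local Notation T := (cfg d).
Local Notation op := (op R d).
Local Notation vec := (vec R d).
Implicit Types A B D X : op.
Implicit Types u v : vec.
Local Notation Z := (@opzero R L d).
Local Notation I1 := (@opid R L d).

Lemma opE A B : (forall x y, A x y = B x y) -> A = B.
Proof. by move=> h; apply/funext=> x; apply/funext=> y; apply: h. Qed.

Lemma sum_delta_l (x : T) (F : T -> C) : \sum_y (x == y)%:R * F y = F x.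
Proof.
rewrite (bigD1 x) //= eqxx mul1r big1 ?addr0 // => y hy.
by rewrite eq_sym (negbTE hy) mul0r.
Qed.

Lemma sum_delta_r (x : T) (F : T -> C) : \sum_y F y * (y == x)%:R = F x.
Proof.
rewrite (bigD1 x) //= eqxx mulr1 big1 ?addr0 // => y hy.
by rewrite (negbTE hy) mulr0.
Qed.

Lemma opmulA A B D : opmul (opmul A B) D = opmul A (opmul B D).
Proof.
apply: opE => x w; rewrite /opmul.
under eq_bigr do rewrite mulr_suml.
rewrite exchange_big /=; apply: eq_bigr => y _.
rewrite mulr_sumr; apply: eq_bigr => z _; by rewrite mulrA.
Qed.

Lemma applyM A B v : apply (opmul A B) v = apply A (apply B v).
Proof.
apply/funext => x; rewrite /apply /opmul.
under eq_bigr do rewrite mulr_suml.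
rewrite exchange_big /=; apply: eq_bigr => y _.
rewrite mulr_sumr; apply: eq_bigr => z _; by rewrite mulrA.
Qed.

Lemma opmulBr A B D : opmul A (opsub B D) = opsub (opmul A B) (opmul A D).
Proof.
apply: opE => x z; rewrite /opmul /opsub -sumrB.
by apply: eq_bigr => y _; rewrite mulrBr.
Qed.

Lemma opmulBl A B D : opmul (opsub A B) D = opsub (opmul A D) (opmul B D).
Proof.
apply: opE => x z; rewrite /opmul /opsub -sumrB.
by apply: eq_bigr => y _; rewrite mulrBl.
Qed.

Lemma opmulDl A B D : opmul (opadd A B) D = opadd (opmul A D) (opmul B D).
Proof.
apply: opE => x z; rewrite /opmul /opadd -big_split.
by apply: eq_bigr => y _; rewrite mulrDl.
Qed.

Lemma opmulDr A B D : opmul A (opadd B D) = opadd (opmul A B) (opmul A D).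
Proof.
apply: opE => x z; rewrite /opmul /opadd -big_split.
by apply: eq_bigr => y _; rewrite mulrDr.
Qed.

Lemma opmul0r A : opmul A (Z) = Z.
Proof. by apply: opE => x z; rewrite /opmul /opzero big1 // => y _; rewrite mulr0. Qed.

Lemma opmul0l A : opmul (Z) A = Z.
Proof. by apply: opE => x z; rewrite /opmul /opzero big1 // => y _; rewrite mul0r. Qed.

Lemma opmul1l A : opmul (I1) A = A.
Proof. by apply: opE => x z; rewrite /opmul /opid sum_delta_l. Qed.

Lemma opmul1r A : opmul A (I1) = A.
Proof. by apply: opE => x z; rewrite /opmul /opid sum_delta_r. Qed.

Lemma opsubr0 A : opsub A (Z) = A.
Proof. by apply: opE => x z; rewrite /opsub /opzero subr0. Qed.

Lemma opadd00 : opadd (Z) (Z) = Z.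
Proof. by apply: opE => x z; rewrite /opadd /opzero addr0. Qed.

Lemma adjointK A : adjoint (adjoint A) = A.
Proof. by apply: opE => x y; rewrite /adjoint conjCK. Qed.

Lemma adjointM A B : adjoint (opmul A B) = opmul (adjoint B) (adjoint A).
Proof.
apply: opE => x z; rewrite /adjoint /opmul rmorph_sum.
by apply: eq_bigr => y _; rewrite rmorphM mulrC.
Qed.

Lemma adjoint0 : adjoint (Z) = Z.
Proof. by apply: opE => x z; rewrite /adjoint /opzero conjC0. Qed.

Lemma adjoint1 : adjoint (I1) = I1.
Proof. by apply: opE => x z; rewrite /adjoint /opid conjC_nat eq_sym. Qed.

Lemma herm_adj A : herm_op A -> adjoint A = A.
Proof. by move=> h; apply: opE => x y; rewrite /adjoint -h. Qed.

Lemma adj_herm A : adjoint A = A -> herm_op A.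
Proof. by move=> h x y; rewrite -{1}h. Qed.

Lemma apply_delta A (y x : T) : apply A (fun z => (z == y)%:R) x = A x y.
Proof. by rewrite /apply sum_delta_r. Qed.

Lemma apply_ext A B : (forall v, apply A v = apply B v) -> A = B.
Proof.
move=> h; apply: opE => x y.
by rewrite -!(apply_delta _ y x) h.
Qed.

Lemma apply0 v : apply (Z) v = (fun _ => 0).
Proof. by apply/funext => x; rewrite /apply big1 // => y _; rewrite /opzero mul0r. Qed.


Lemma dotE K (u v : vec) :
  dot u (apply K v) = \sum_x \sum_y (u x)^* * K x y * v y.
Proof.
rewrite /dot /apply; apply: eq_bigr => x _; rewrite mulr_sumr.
by apply: eq_bigr => y _; rewrite mulrA.
Qed.

Lemma lin_delta_r (x y : T) (c : C) (F : T -> C) :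
  \sum_b F b * ((b == x)%:R + c * (b == y)%:R) = F x + c * F y.
Proof.
under eq_bigr do rewrite mulrDr mulrCA.
by rewrite big_split /= sum_delta_r -mulr_sumr sum_delta_r.
Qed.

Lemma lin_delta_l (x y : T) (c : C) (F : T -> C) :
  \sum_b ((b == x)%:R + c * (b == y)%:R) * F b = F x + c * F y.
Proof.
under eq_bigr do rewrite mulrC.
exact: lin_delta_r.
Qed.

Lemma quad K (x y : T) (c : C) :
  dot (fun z => (z == x)%:R + c * (z == y)%:R)
      (apply K (fun z => (z == x)%:R + c * (z == y)%:R))
  = K x x + c * K x y + c^* * (K y x + c * K y y).
Proof.
rewrite dotE.
transitivity (\sum_a ((a == x)%:R + c * (a == y)%:R)^* * (K a x + c * K a y)).
  apply: eq_bigr => a _.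
  rewrite (lin_delta_r x y c (fun b => ((a == x)%:R + c * (a == y)%:R)^* * K a b)).
  by rewrite mulrDr mulrCA.
under eq_bigr do rewrite rmorphD rmorphM /= !conjC_nat.
by rewrite lin_delta_l.
Qed.

Lemma polar K : (forall v : vec, dot v (apply K v) = 0) -> K = Z.
Proof.
move=> h.
have h0 : forall x, K x x = 0.
  by move=> x; have := h (fun z => (z == x)%:R + 0 * (z == x)%:R);
  rewrite quad conjC0 !mul0r !addr0.
apply: opE => x y; rewrite /opzero.
have h1 := h (fun z => (z == x)%:R + 1 * (z == y)%:R).
rewrite quad conjC1 !h0 !mul1r add0r addr0 in h1.
have h2 := h (fun z => (z == x)%:R + 'i * (z == y)%:R).
rewrite quad conjCi !h0 mulr0 add0r addr0 in h2.
have e : K y x = - K x y by apply/eqP; rewrite -addr_eq0 addrC h1.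
have : 'i * (2%:R * K x y) = 0 by rewrite -h2 e; ring.
move/eqP; rewrite mulf_eq0 (negbTE (neq0Ci _)) /= mulf_eq0 pnatr_eq0 /=.
by move/eqP.
Qed.

Lemma dotB A B (v : vec) :
  dot v (apply (opsub A B) v) = dot v (apply A v) - dot v (apply B v).
Proof.
rewrite !dotE -sumrB; apply: eq_bigr => x _; rewrite -sumrB.
by apply: eq_bigr => y _; rewrite /opsub; ring.
Qed.

Lemma dot_adj A (v : vec) :
  dot v (apply (adjoint A) v) = (dot v (apply A v))^*.
Proof.
rewrite !dotE rmorph_sum exchange_big /=; apply: eq_bigr => y _.
rewrite rmorph_sum; apply: eq_bigr => x _.
by rewrite /adjoint !rmorphM /= conjCK; ring.
Qed.

Lemma psd_herm A : psd A -> herm_op A.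
Proof.
move=> hA.
have : opsub A (adjoint A) = Z.
  apply: polar => v; rewrite dotB dot_adj.
  by rewrite conj_Creal ?subrr // ger0_real.
move=> hK x y; have := congr1 (fun F => F x y) hK.
by rewrite /opsub /opzero /adjoint => /eqP; rewrite subr_eq0 => /eqP.
Qed.


Lemma comm_proj X G P : adjoint X = X -> opmul X G = opmul G X ->
  adjoint P = P -> opmul G P = Z ->
  (forall v, apply G v = (fun _ => 0) -> apply P v = v) ->
  opmul X P = opmul P X.
Proof.
move=> hX hXG hP hGP hker.
have GXP : opmul G (opmul X P) = Z by rewrite -opmulA -hXG opmulA hGP opmul0r.
have e1 : opmul P (opmul X P) = opmul X P.
  apply: apply_ext => v; rewrite applyM; apply: hker.
  by rewrite -applyM GXP apply0.
have e2 : opmul P (opmul X P) = opmul P X.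
  have := congr1 (@adjoint R L d) e1.
  by rewrite !adjointM hX hP -opmulA.
by rewrite -e1 e2.
Qed.

Lemma kp_GP0 G P : is_kernel_projector G P -> opmul G P = Z.
Proof.
case=> _ [_ [h _]]; apply: apply_ext => v.
by rewrite applyM h apply0.
Qed.

Local Notation sT := {set site L}.

Lemma prod_comm (r : seq sT) (F : sT -> op) X :
  (forall a, a \in r -> opmul X (F a) = opmul (F a) X) ->
  opmul X (opprod r F) = opmul (opprod r F) X.
Proof.
elim: r => [|a r IH] h /=; first by rewrite opmul1l opmul1r.
rewrite -opmulA h ?mem_head // !opmulA IH // => b hb.
by apply: h; rewrite in_cons hb orbT.
Qed.

Lemma prod_adj (r : seq sT) (F : sT -> op) :
  (forall a, a \in r -> adjoint (F a) = F a) ->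
  (forall a b, a \in r -> b \in r -> opmul (F a) (F b) = opmul (F b) (F a)) ->
  adjoint (opprod r F) = opprod r F.
Proof.
elim: r => [|a r IH] h hc /=; first exact: adjoint1.
rewrite adjointM h ?mem_head // IH.
- symmetry; apply: prod_comm => b hb; apply: hc; rewrite ?mem_head //.
  by rewrite in_cons hb orbT.
- by move=> b hb; apply: h; rewrite in_cons hb orbT.
- by move=> b b' hb hb'; apply: hc; rewrite in_cons ?hb ?hb' orbT.
Qed.

Lemma prod_kill (r : seq sT) (F : sT -> op) (Gd : op) (A : sT) :
  A \in r -> opmul Gd (F A) = Z ->
  (forall b, b \in r -> opmul Gd (F b) = opmul (F b) Gd) ->
  opmul Gd (opprod r F) = Z.
Proof.
elim: r => [|a r IH] //= hA h0 hc.
case: (boolP (A == a)) => [/eqP <-|hne].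
  by rewrite -opmulA h0 opmul0l.
move: hA; rewrite in_cons (negbTE hne) /= => hA.
rewrite -opmulA hc ?mem_head // opmulA IH ?opmul0r // => b hb.
by apply: hc; rewrite in_cons hb orbT.
Qed.

Lemma sum_kill_l (r : seq sT) (F : sT -> op) X :
  (forall a, a \in r -> opmul (F a) X = Z) -> opmul (opsum r F) X = Z.
Proof.
elim: r => [|a r IH] h /=; first exact: opmul0l.
rewrite opmulDl h ?mem_head // IH ?opadd00 // => b hb.
by apply: h; rewrite in_cons hb orbT.
Qed.

Lemma sum_kill_r (r : seq sT) (F : sT -> op) X :
  (forall a, a \in r -> opmul X (F a) = Z) -> opmul X (opsum r F) = Z.
Proof.
elim: r => [|a r IH] h /=; first exact: opmul0r.
rewrite opmulDr h ?mem_head // IH ?opadd00 // => b hb.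
by apply: h; rewrite in_cons hb orbT.
Qed.


Definition nsq (u : vec) : C := \sum_x `|u x| ^+ 2.

Lemma nsq_ge0 u : 0 <= nsq u.
Proof. by apply: sumr_ge0 => x _; rewrite exprn_ge0. Qed.

Lemma vnormE u : vnorm u = Num.sqrt (complex.Re (nsq u)).
Proof.
rewrite /vnorm /dot /nsq; congr (Num.sqrt (complex.Re _)).
by apply: eq_bigr => x _; rewrite normCKC.
Qed.

Lemma Re_ge0 (s : C) : 0 <= s -> 0 <= complex.Re s.
Proof. by rewrite lecE => /andP[]. Qed.

Lemma Re_le (s t : C) : s <= t -> complex.Re s <= complex.Re t.
Proof. by rewrite lecE => /andP[]. Qed.

Lemma vnorm0 : vnorm (fun _ : T => (0 : C)) = 0.
Proof.
rewrite vnormE /nsq big1 ?sqrtr0 // => x _.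
by rewrite normr0 expr0n.
Qed.

Lemma vnorm_le0 u : vnorm u <= 0 -> u = (fun _ => 0).
Proof.
rewrite vnormE => h.
have hs := nsq_ge0 u.
have e0 : Num.sqrt (complex.Re (nsq u)) = 0.
  by apply/eqP; rewrite eq_le h sqrtr_ge0.
move/eqP: e0; rewrite sqrtr_eq0 => hre.
have hs0 : nsq u <= 0.
  move: hs; rewrite !lecE => /andP[/eqP hi _].
  by rewrite hi eqxx hre.
have e : nsq u = 0 by apply/eqP; rewrite eq_le hs0 hs.
apply/funext => x.
have : `|u x| ^+ 2 = 0.
  apply: (@psumr_eq0P _ _ predT (fun x => `|u x| ^+ 2)) => //.
  by move=> i _; rewrite exprn_ge0.
by move/eqP; rewrite sqrf_eq0 normr_eq0 => /eqP.
Qed.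

Lemma bounded A : exists M, forall v, vnorm v <= 1 -> vnorm (apply A v) <= M.
Proof.
exists (Num.sqrt (complex.Re (\sum_x (\sum_y `|A x y|) ^+ 2))) => v hv.
have hv1 : forall y, `|v y| <= 1.
  move=> y.
  have hre : complex.Re (nsq v) <= 1.
    have h0 := @Re_ge0 _ (nsq_ge0 v).
    rewrite -(sqr_sqrtr h0) exprn_ile1 ?sqrtr_ge0 //.
    by rewrite -vnormE.
  have hn : nsq v <= 1.
    move: (nsq_ge0 v); rewrite !lecE => /andP[/eqP hi _].
    by rewrite hi hre andbT.
  have hy : `|v y| ^+ 2 <= nsq v.
    rewrite /nsq (bigD1 y) //= lerDl.
    by apply: sumr_ge0 => x _; rewrite exprn_ge0.
  by rewrite -(@expr_le1 _ 2) // (le_trans hy hn).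
rewrite vnormE; apply: ler_wsqrtr; apply: Re_le; rewrite /nsq.
apply: ler_sum => x _.
have hx : `|apply A v x| <= \sum_y `|A x y|.
  apply: le_trans (ler_norm_sum _ _ _) _.
  apply: ler_sum => y _; rewrite normrM.
  by rewrite -{2}(mulr1 `|A x y|) ler_wpM2l.
by rewrite !expr2 ler_pM.
Qed.

Lemma opnorm_le A B (b : R) : 0 <= b ->
  (forall v, vnorm (apply A v) <= b * vnorm (apply B v)) ->
  opnorm A <= b * opnorm B.
Proof.
move=> hb h; rewrite /opnorm.
have [M hM] := bounded B.
have v0 : vnorm (fun _ : T => (0 : C)) <= 1 by rewrite vnorm0.
have hsup : has_sup [set vnorm (apply B v) | v in [set v : vec | vnorm v <= 1]].
  split.
    by exists (vnorm (apply B (fun _ => 0))); exists (fun _ => 0).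
  by exists M => y [v hv <-]; exact: hM.
apply: ge_sup.
  by exists (vnorm (apply A (fun _ => 0))); exists (fun _ => 0).
move=> y [v hv <-]; apply: le_trans (h v) _.
apply: ler_wpM2l => //; apply: (sup_upper_bound hsup).
by exists v.
Qed.


Lemma key Wo PC S : opmul Wo PC = Z -> opmul PC Wo = Z ->
  opmul (opsub I1 PC) (opmul (comm S Wo) PC) = opmul Wo (opsub Z (opmul S PC)).
Proof.
move=> h1 h2.
rewrite /comm [opmul (opsub (opmul S Wo) _) PC]opmulBl !opmulA h1 opmul0r.
rewrite !opmulBr !opmul0r opmulBl opmul1l -[opmul PC (opmul Wo _)]opmulA h2 opmul0l opsubr0.
done.
Qed.

End Alg.

Theorem lemma4 (R : realType) (L : nat) (d : site L -> nat)
  (G P : {set site L} -> op R d)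
  (HGact : forall A, A \in squares L -> acts_on A (G A))
  (HGcomm : forall A B, A \in squares L -> B \in squares L ->
     opmul (G A) (G B) = opmul (G B) (G A))
  (HGpos : forall A, A \in squares L -> psd (G A))
  (HGsq : forall A, A \in squares L -> ople (G A) (opmul (G A) (G A)))
  (HP : forall A, A \in squares L -> is_kernel_projector (G A) (P A))
  (C : {set site L}) (W : op R d) (b : R)
  (HWherm : herm_op W)
  (Hb0 : 0 <= b) (Hb1 : b < 1)
  (HWbound : forall psi : vec R d,
     vnorm (apply W psi) <= b * vnorm (apply (H0_on G C) psi))
  (S : op R d) :
  opnorm (opmul (Q_on P C) (opmul (comm S W) (P_on P C)))
  <= b * opnorm (opmul (Q_on P C) (opmul (comm S (H0_on G C)) (P_on P C))).
Proof.
have hGh : forall A, A \in squares L -> adjoint (G A) = G A.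
  by move=> A hA; apply: herm_adj; apply: psd_herm; apply: HGpos.
have hPh : forall A, A \in squares L -> adjoint (P A) = P A.
  by move=> A hA; case: (HP A hA) => h _; apply: herm_adj.
have hGP0 : forall A, A \in squares L -> opmul (G A) (P A) = @opzero R L d.
  by move=> A hA; apply: kp_GP0; apply: HP.
have hker : forall A, A \in squares L -> forall v,
    apply (G A) v = (fun _ => 0) -> apply (P A) v = v.
  by move=> A hA; case: (HP A hA) => _ [_ [_ h]].
have cGP : forall A B, A \in squares L -> B \in squares L ->
    opmul (G A) (P B) = opmul (P B) (G A).
  move=> A B hA hB; apply: comm_proj (hGh A hA) (HGcomm A B hA hB)
    (hPh B hB) (hGP0 B hB) (hker B hB).
have cPP : forall A B, A \in squares L -> B \in squares L ->
    opmul (P A) (P B) = opmul (P B) (P A).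
  move=> A B hA hB; apply: comm_proj (hPh A hA) _
    (hPh B hB) (hGP0 B hB) (hker B hB).
  by rewrite (cGP B A hB hA).
have hr : forall a, a \in squares_in C -> a \in squares L.
  by move=> a; rewrite /squares_in mem_enum inE => /andP[].
have hPCadj : adjoint (P_on P C) = P_on P C.
  apply: prod_adj => [a ha|a a' ha ha']; first by apply: hPh; apply: hr.
  by apply: cPP; apply: hr.
have hGPC : forall a, a \in squares_in C -> opmul (G a) (P_on P C) = @opzero R L d.
  move=> a ha; rewrite /P_on; apply: (prod_kill _ _ _ _ _ _ _ ha); first by apply: hGP0; apply: hr.
  by move=> b' hb; apply: cGP; apply: hr.
have H0P : opmul (H0_on G C) (P_on P C) = @opzero R L d.
  by apply: sum_kill_l.
have PH0 : opmul (P_on P C) (H0_on G C) = @opzero R L d.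
  apply: sum_kill_r => a ha.
  rewrite -prod_comm; first exact: hGPC.
  by move=> b' hb; apply: cGP; apply: hr.
have WP : opmul W (P_on P C) = @opzero R L d.
  apply: apply_ext => v; rewrite applyM apply0; apply: vnorm_le0.
  apply: le_trans (HWbound _) _.
  by rewrite -applyM H0P apply0 vnorm0 mulr0.
have PW : opmul (P_on P C) W = @opzero R L d.
  have := congr1 (@adjoint R L d) WP.
  by rewrite adjointM hPCadj herm_adj // adjoint0.
rewrite /Q_on (key _ _ _ _ _ S WP PW) (key _ _ _ _ _ S H0P PH0).
apply: (opnorm_le _ _ _ _ _ _ Hb0) => v; rewrite !applyM; exact: HWbound.
Qed.
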